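(* Let $\mathcal{F}=(M,\{A^u\}_{u\in Q})$ be an FDFA and let $\underline{B}$ and $\overline{B}$ be the Büchi automata constructed from $\mathcal{F}$ as described in the context. Let $n$ be the number of states of the leading automaton $M$ and $k$ the number of states of the largest progress automaton of $\mathcal{F}$. Then the number of states of $\underline{B}$ is in $\mathcal{O}(n^2k^3)$ and the number of states of $\overline{B}$ is in $\mathcal{O}(n^2k^2)$. Moreover, $UP(L(\underline{B}))\subseteq UP(\mathcal{F})\subseteq UP(L(\overline{B}))$, and $UP(L(\underline{B}))=UP(\mathcal{F})$ when $\mathcal{F}$ is a canonical FDFA (the periodic, syntactic or recurrent FDFA of some $\omega$-regular language).
   Context: $\Sigma$ is a finite alphabet. For a complete DFA $A$ and finite word $w$, $A(w)$ is the state reached from the initial state on $w$. An FDFA is $\mathcal{F}=(M,\{A^q\}_{q\in Q})$ with $M=(\Sigma,Q,q_0,\delta)$ a complete DFA without accepting states and each $A^q=(\Sigma,Q_q,s_q,F_q,\delta_q)$ a complete DFA. $(u,v)$ with $u,v\in\Sigma^*$ is accepted by $\mathcal{F}$ iff $M(uv)=M(u)$ and $v\in L(A^{M(u)})$; $UP(\mathcal{F})=\{uv^\omega: v\neq\epsilon,\ (u,v)\text{ accepted}\}$. For an $\omega$-language $L'$, $UP(L')$ is the set of ultimately periodic words in $L'$. Construction: for a DFA $D$ and states $s,t$, $D^s_t$ is $D$ with initial state $s$ and accepting set $\{t\}$. For $u\in Q$, $v\in F_u$ let $\underline{P}_{(u,v)}=M^u_u\times(A^u)^{s_u}_v\times(A^u)^v_v$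 and $\overline{P}_{(u,v)}=M^u_u\times(A^u)^{s_u}_v$ (synchronous products, each with a single accepting state). From such a product $P=(\Sigma,Q_P,s_P,\{f_P\},\delta_P)$ form the Büchi automaton with $\epsilon$-transitions $(\Sigma,Q_P\cup\{f\},s_P,\{f\},\delta_P\cup\{(f,\epsilon,s_P),(f_P,\epsilon,f)\})$ with $f$ fresh. $\underline{B}$ (resp. $\overline{B}$) has state set $Q$ together with disjoint copies of these automata built from $\underline{P}_{(u,v)}$ (resp. $\overline{P}_{(u,v)}$) for all $u\in Q,v\in F_u$; initial state $q_0$; accepting states the fresh states $f$ of all components; transitions $\delta$, the transitions of all components, and $\epsilon$-transitions $(u,\epsilon,s_P)$ from $u\in Q$ to the initial state of the component for $(u,v)$. An infinite word is accepted if it has a run (with $\epsilon$-moves) reading it that visits accepting states infinitely often. Canonical FDFAs of an $\omega$-regular $L$: $x\sim_L y$ iff $\forall w\in\Sigma^\omega$, $xw\in L\Leftrightarrow yw\in L$. Leading automaton: states the classes of $\sim_L$, initial $[\epsilon]$, $[x]\xrightarrow{a}[xa]$. For each state with representative $u$: $x\approx^u_P y$ iff $\forall v$: $u(xv)^\omega\in L\Leftrightarrow u(yv)^\omega\in L$; $x\approx^u_S y$ iff $ux\sim_L uy$ and $\forall v$: $uxv\sim_L u\Rightarrow(u(xv)^\omega\in L\Leftrightarrow u(yv)^\omega\in L)$; $x\approx^u_R y$ iff $\forall v$: $(uxv\sim_L u\wedge u(xv)^\omega\in L)\Leftrightarrow(uyv\sim_L u\wedge u(yv)^\omega\in L)$.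 For $K\in\{P,S,R\}$ the progress automaton $A^u$ has states the classes of $\approx^u_K$, initial $[\epsilon]$, $[x]\xrightarrow{a}[xa]$, and accepting states the classes $[v]$ with $uv^\omega\in L$ ($K=P$), resp. with $uv\sim_L u$ and $uv^\omega\in L$ ($K=S,R$); these are the periodic, syntactic and recurrent FDFAs of $L$. *)

(* Defs.v *)
From mathcomp Require Import all_boot.
Set Implicit Arguments. Unset Strict Implicit. Unset Printing Implicit Defensive.

Section Words.
Variable S : finType.

(** Ultimately periodic word u (a::v)^omega (the period a::v is nonempty). *)
Definition lasso (u : seq S) (a : S) (v : seq S) : nat -> S :=
  let p := a :: v in
  fun i => if i < size u then nth a u i else nth a p ((i - size u) %% size p).

Definition prepend (x : seq S) (w : nat -> S) : nat -> S :=
  fun i => if i < size x then nth (w 0) x i else w (i - size x).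

Definition is_up (w : nat -> S) : Prop :=
  exists u a v, forall i, w i = lasso u a v i.

Definition UP (L : (nat -> S) -> Prop) : (nat -> S) -> Prop :=
  fun w => L w /\ is_up w.

(** "u v^omega \in L", false by convention when v is empty *)
Definition upin (L : (nat -> S) -> Prop) (u v : seq S) : Prop :=
  match v with [::] => False | a :: v' => L (lasso u a v') end.

Record nba := NBA {
  nst : finType; ninit : nst; ntrans : nst -> S -> nst -> bool; nacc : {set nst} }.

Definition nba_accepts (A : nba) (w : nat -> S) : Prop :=
  exists r : nat -> nst A, r 0 = ninit A /\
    (forall i, ntrans (r i) (w i) (r i.+1)) /\
    (forall i, exists i', i <= i' /\ r i' \in nacc A).

Definition omega_regular (L : (nat -> S) -> Prop) : Prop :=
  exists A : nba, forall w, L w <-> nba_accepts A w.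

(** Buechi automata with epsilon transitions (None = epsilon). *)
Record eba := EBA {
  est : finType; einit : est; etrans : est -> option S -> est -> bool;
  eacc : {set est} }.

(** A run reading w: the non-epsilon labels, in order, are exactly w. *)
Definition eba_accepts (B : eba) (w : nat -> S) : Prop :=
  exists (r : nat -> est B) (l : nat -> option S) (pos : nat -> nat),
    r 0 = einit B /\
    (forall i, etrans (r i) (l i) (r i.+1)) /\
    (forall j, pos j < pos j.+1) /\
    (forall j, l (pos j) = Some (w j)) /\
    (forall i, (forall j, pos j <> i) -> l i = None) /\
    (forall i, exists i', i <= i' /\ r i' \in eacc B).

(** Families of DFAs: M has no accepting states; progress DFAs A^q. *)
Record fdfa := FDFA {
  lq : finType; l0 : lq; ld : lq -> S -> lq;
  pq : lq -> finType; ps : forall q, pq q; pd : forall q, pq q -> S -> pq q;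
  pF : forall q, {set pq q} }.

Variable F : fdfa.

Definition Mrun (x : seq S) : lq F := foldl (fun q a => ld q a) (l0 F) x.
Definition Arun (q : lq F) (x : seq S) : @pq F q := foldl (fun p a => pd p a) (ps q) x.

Definition fdfa_acc (u v : seq S) : bool :=
  (Mrun (u ++ v) == Mrun u) && (Arun (Mrun u) v \in @pF F (Mrun u)).

Definition UP_fdfa : (nat -> S) -> Prop :=
  fun w => exists u a v, fdfa_acc u (a :: v) /\ forall i, w i = lasso u a v i.

Definition comp : finType := {x : {u : lq F & @pq F u} | tagged x \in @pF F (tag x)}.
Definition ctag (c : comp) : lq F := tag (val c).
Definition cv (c : comp) : @pq F (ctag c) := tagged (val c).

(** Generic construction of B from a family of products P_c (each with
    initial state, transition function and single accepting state). *)
Section Build.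
Variable P : comp -> finType.
Variable pinit : forall c, P c.
Variable pstep : forall c, P c -> S -> P c.
Variable pfin : forall c, P c.

Definition bstate : finType := (lq F + {c : comp & option (P c)})%type.

(* inr (c, None) is the fresh state f of component c *)
Definition btrans (s : bstate) (o : option S) (t : bstate) : bool :=
  match s, o with
  | inl q, Some a => t == inl (ld q a)
  | inl q, None =>
      [exists c : comp, (ctag c == q) && (t == inr (Tagged _ (Some (pinit c))))]
  | inr (existT c (Some p)), Some a => t == inr (Tagged _ (Some (pstep p a)))
  | inr (existT c (Some p)), None =>
      (p == pfin c) && (t == inr (Tagged (fun c => option (P c)) (None : option (P c))))
  | inr (existT c None), None => t == inr (Tagged _ (Some (pinit c)))
  | inr (existT c None), Some _ => false
  end.

Definition bacc : {set bstate} :=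
  [set s : bstate | if s is inr (existT _ None) then true else false].

Definition build : eba := @EBA bstate (inl (l0 F)) btrans bacc.
End Build.

(** underline P_(u,v) = M^u_u x (A^u)^{s_u}_v x (A^u)^v_v *)
Definition uP (c : comp) : finType := (lq F * @pq F (ctag c) * @pq F (ctag c))%type.
Definition uinit (c : comp) : uP c := (ctag c, @ps F (ctag c), cv c).
Definition ustep (c : comp) (p : uP c) (a : S) : uP c :=
  (ld p.1.1 a, pd p.1.2 a, pd p.2 a).
Definition ufin (c : comp) : uP c := (ctag c, cv c, cv c).
Definition underB : eba := @build uP uinit ustep ufin.

(** overline P_(u,v) = M^u_u x (A^u)^{s_u}_v *)
Definition oP (c : comp) : finType := (lq F * @pq F (ctag c))%type.
Definition oinit (c : comp) : oP c := (ctag c, @ps F (ctag c)).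
Definition ostep (c : comp) (p : oP c) (a : S) : oP c := (ld p.1 a, pd p.2 a).
Definition ofin (c : comp) : oP c := (ctag c, cv c).
Definition overB : eba := @build oP oinit ostep ofin.

Definition nM : nat := #|lq F|.
Definition kmax : nat := \max_(q : lq F) #|@pq F q|.

End Words.

Section Canonical.
Variable S : finType.
Variable L : (nat -> S) -> Prop.

Definition simL (x y : seq S) : Prop :=
  forall w, L (prepend x w) <-> L (prepend y w).

Definition approxP (u x y : seq S) : Prop :=
  forall v, upin L u (x ++ v) <-> upin L u (y ++ v).
Definition approxS (u x y : seq S) : Prop :=
  simL (u ++ x) (u ++ y) /\
  forall v, simL (u ++ x ++ v) u -> (upin L u (x ++ v) <-> upin L u (y ++ v)).
Definition approxR (u x y : seq S) : Prop :=
  forall v, (simL (u ++ x ++ v) u /\ upin L u (x ++ v)) <->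
            (simL (u ++ y ++ v) u /\ upin L u (y ++ v)).

Inductive fkind := Periodic | Syntactic | Recurrent.

Definition approx (K : fkind) : seq S -> seq S -> seq S -> Prop :=
  match K with Periodic => approxP | Syntactic => approxS | Recurrent => approxR end.

Definition accK (K : fkind) (u v : seq S) : Prop :=
  match K with
  | Periodic => upin L u v
  | _ => simL (u ++ v) u /\ upin L u v
  end.

(** F is (isomorphic to) the periodic / syntactic / recurrent FDFA of L:
    M's states are exactly the classes of ~_L (M(x) = M(y) iff x ~_L y, and
    every state is reached), and for every u, the progress DFA at M(u) has
    as states exactly the classes of the relation for u, with the
    prescribed accepting classes. *)
Definition is_canonical_fdfa (K : fkind) (F : fdfa S) : Prop :=
  (forall x y, Mrun F x = Mrun F y <-> simL x y) /\
  (forall q, exists x, Mrun F x = q) /\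
  (forall u : seq S,
     (forall x y, Arun (Mrun F u) x = Arun (Mrun F u) y <-> approx K u x y) /\
     (forall p, exists x, Arun (Mrun F u) x = p) /\
     (forall v, Arun (Mrun F u) v \in @pF S F (Mrun F u) <-> accK K u v)).
End Canonical.

(* Main.v *)
Require Import Defs.
From mathcomp Require Import all_boot zify.
From Stdlib Require Import FunctionalExtensionality.
Require Import Defs.
Set Implicit Arguments. Unset Strict Implicit. Unset Printing Implicit Defensive.

Section Acc.
Variable S : finType.
Variable B : eba S.
Variable w : nat -> S.

Fixpoint kk (l : nat -> option S) (i : nat) : nat :=
  if i is i'.+1 then kk l i' + (l i' != None) else 0.

Lemma kk_mono l i j : i <= j -> kk l i <= kk l j.
Proof.
move=> /subnKC <-; elim: (j - i) => [|d IH]; first by rewrite addn0.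
by rewrite addnS /=; apply: leq_trans IH (leq_addr _ _).
Qed.

Definition run_ok (r : nat -> est B) (l : nat -> option S) :=
  [/\ r 0 = einit B, (forall i, etrans (r i) (l i) (r i.+1)),
      (forall i x, l i = Some x -> x = w (kk l i)),
      (forall N, exists i, N <= kk l i) &
      (forall i, exists i', i <= i' /\ r i' \in eacc B)].

Lemma acc_of_run r l : run_ok r l -> eba_accepts B w.
Proof.
case=> H0 Htr Hcons Hunb Hacc.
have Hex : forall j, exists i, (kk l i == j) && (l i != None).
  move=> j; have [i0 Hi0] := Hunb j.+1.
  have exP : exists i, j < kk l i by exists i0.
  case: (ex_minnP exP) => m Pm minm.
  case: m Pm minm => [|m] Pm minm; first by [].
  have nP : ~~ (j < kk l m) by apply/negP => /minm; rewrite ltnn.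
  exists m; move: Pm nP => /=; case: (l m) => [x|] /=; rewrite ?addn0 ?addn1.
  - by rewrite ltnS -leqNgt => a b; rewrite eqn_leq a b.
  - by move=> ->.
pose pos : nat -> nat := fun j => xchoose (Hex j).
have Hpos j : kk l (pos j) = j /\ l (pos j) != None.
  by have /andP[/eqP -> ->] := xchooseP (Hex j).
clearbody pos.
have uniq_i i i' : l i' != None -> kk l i = kk l i' -> i <= i'.
  move=> Hi Hk; rewrite leqNgt; apply/negP => Hlt.
  have := kk_mono l Hlt; rewrite /= -Hk; case: (l i') Hi => // x _.
  by have -> : (Some x != None) = true by []; rewrite addn1 ltnn.
exists r, l, pos; split; first by []; split; first by []; split; [|split; [|split]]; last by [].
- move=> j; rewrite ltnNge; apply/negP => Hle.
  have := kk_mono l Hle; rewrite (Hpos j).1 (Hpos j.+1).1 ltnn //.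
- move=> j; have [Hk Hl] := Hpos j; move: Hl; case E: (l (pos j)) => [x|] // _.
  by rewrite (Hcons _ _ E) Hk.
- move=> i Hi; case E: (l i) => [x|] //.
  have [Hk Hl] := Hpos (kk l i).
  have e : pos (kk l i) = i.
    have h1 : pos (kk l i) <= i by apply: uniq_i; [rewrite E | rewrite Hk].
    have h2 : i <= pos (kk l i) by apply: uniq_i; [exact: Hl | rewrite Hk].
    have H := @anti_leq (pos (kk l i)) i.
    exact: (H (introT andP (conj h1 h2))).
  exfalso; exact: (Hi (kk l i) e).
Qed.

Lemma run_of_acc : eba_accepts B w -> exists r l, run_ok r l.
Proof.
case=> r [l [pos [H0 [Htr [Hpos [Hl [HNone Hacc]]]]]]].
have Hmono : forall j j', j < j' -> pos j < pos j'.
  move=> j j'; elim: j' => // j' IH; rewrite ltnS leq_eqVlt => /orP[/eqP ->|/IH h].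
    exact: Hpos.
  exact: ltn_trans h (Hpos _).
have Hinj : injective pos.
  move=> j j' e; case: (ltngtP j j') => // h; have := Hmono _ _ h; by rewrite e ltnn.
have Hmono' : forall j j', j <= j' -> pos j <= pos j'.
  by move=> j j'; rewrite leq_eqVlt => /orP[/eqP ->//|/Hmono/ltnW].
have Hpos_none : forall j i, pos j = i -> l i <> None.
  by move=> j i <-; rewrite Hl.
have Claim : forall i j, (pos j < i) = (j < kk l i).
  elim=> [|i IH] j /=; first by rewrite !ltn0.
  case El: (l i) => [x|] /=.
  - have HJ : pos (kk l i) = i.
      have h1 : i <= pos (kk l i) by rewrite leqNgt IH ltnn.
      move: h1; rewrite leq_eqVlt => /orP[/eqP //|h2].
      exfalso; suff : l i = None by rewrite El.
      apply: HNone => j' e.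
      case: (ltnP j' (kk l i)) => h3.
        by move: h3; rewrite -IH e ltnn.
      by have := Hmono' _ _ h3; rewrite e leqNgt h2.
    rewrite addn1 !ltnS [pos j <= i]leq_eqVlt [j <= kk l i]leq_eqVlt IH -{1}HJ (inj_eq Hinj) //.
  - rewrite addn0 ltnS [pos j <= i]leq_eqVlt IH; case: eqP => // e.
    by exfalso; apply: (Hpos_none j i e).
have Hpk : forall i, l i <> None -> pos (kk l i) = i.
  move=> i Hi; have h1 : i <= pos (kk l i) by rewrite leqNgt Claim ltnn.
  move: h1; rewrite leq_eqVlt => /orP[/eqP //|h2].
  exfalso; apply: Hi; apply: HNone => j' e.
  case: (ltnP j' (kk l i)) => h3.
    by move: h3; rewrite -Claim e ltnn.
  by have := Hmono' _ _ h3; rewrite e leqNgt h2.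
exists r, l; split => //.
- move=> i x E; have := Hpk i; rewrite E => /(_ ltac:(by [])) e.
  by move: (Hl (kk l i)); rewrite e E => -[].
- move=> N; exists (pos N).+1; move: (Claim (pos N).+1 N); rewrite ltnSn => /esym h.
  exact: ltnW h.
Qed.
Lemma kk_unb l : (forall i, exists i', i <= i' /\ l i' != None) ->
  forall N, exists i, N <= kk l i.
Proof.
move=> H; elim=> [|N [i Hi]]; first by exists 0.
have [i' [Hii' Hl]] := H i; exists i'.+1 => /=.
move: Hl; case: (l i') => // x _.
have -> : (Some x != None) = true by [].
by rewrite addn1 ltnS; apply: leq_trans Hi (kk_mono l Hii').
Qed.
End Acc.
Section Construct.
Variable S : finType.
Variable F : fdfa S.
Variable P : comp F -> finType.
Variable pinit : forall c, P c.
Variable pstep : forall c, P c -> S -> P c.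
Variable pfin : forall c, P c.

Variable c0 : comp F.
Variables (u y : seq S) (d0 : S) (w : nat -> S).
Hypothesis Hu : Mrun F u = ctag c0.
Hypothesis Hy : foldl (@pstep c0) (pinit c0) y = pfin c0.
Hypothesis Hy0 : 0 < size y.
Hypothesis Hw1 : forall k, k < size u -> w k = nth d0 u k.
Hypothesis Hw2 : forall m t, t < size y -> w (size u + m * size y + t) = nth d0 y t.

Definition cfg := (nat * nat * bstate (F:=F) P)%type.
Definition stepf (x : cfg) : option S * cfg :=
  let: (k, t, s) := x in
  match s with
  | inl q => if k < size u then (Some (w k), (k.+1, t, inl (ld q (w k))))
             else (None, (k, 0, inr (Tagged (fun c => option (P c)) (Some (pinit c0)))))
  | inr (existT c' (Some p)) =>
      if t < size y then (Some (w k), (k.+1, t.+1, inr (Tagged (fun c => option (P c)) (Some (@pstep c' p (w k))))))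
      else (None, (k, t, inr (Tagged (fun c => option (P c)) (None : option (P c')))))
  | inr (existT c' None) => (None, (k, 0, inr (Tagged (fun c => option (P c)) (Some (pinit c')))))
  end.

Fixpoint cf i : cfg := if i is i'.+1 then (stepf (cf i')).2 else (0, 0, inl (l0 F)).
Definition rr i := (cf i).2.
Definition lab i := (stepf (cf i)).1.

Lemma kk_cf i : kk lab i = (cf i).1.1.
Proof.
elim: i => [|i IH] //=; rewrite IH /lab.
case: (cf i) => [[k t] s]; case: s => [q|[c' [p|]]] /=; try case: ifP => //= _; by rewrite ?addn1 ?addn0.
Qed.

Definition Inv (x : cfg) : Prop :=
  let: (k, t, s) := x in
  (exists q, s = inl q /\ k <= size u /\ q = Mrun F (take k u)) \/
  (s = inr (Tagged (fun c => option (P c)) (None : option (P c0))) /\ exists m, k = size u + m * size y) \/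
  (exists p, s = inr (Tagged (fun c => option (P c)) (Some p)) /\ t <= size y /\
     (exists m, k = size u + m * size y + t) /\ p = foldl (@pstep c0) (pinit c0) (take t y)).

Lemma inv_cf i : Inv (cf i).
Proof.
elim: i => [|i IH] /=.
  by rewrite /Inv; left; exists (l0 F); split => //; split => //; rewrite take0.
move: IH; case: (cf i) => [[k t] s].
case=> [[q [-> [hk ->]]] | [[-> [m hm]] | [p [-> [ht [[m hm] ->]]]]]] /=.
- case: ifP => hku /=.
  + left; exists (ld (Mrun F (take k u)) (w k)); split => //; split => //.
    by rewrite (take_nth d0 hku) /Mrun foldl_rcons -Hw1.
  + right; right; exists (pinit c0); split => //; split => //; split; last by rewrite take0.
    by exists 0; rewrite mul0n addn0 addn0; apply/eqP; rewrite eqn_leq hk leqNgt hku.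
- right; right; exists (pinit c0); split => //; split => //; split; last by rewrite take0.
  by exists m; rewrite addn0.
- case: ifP => hty /=.
  + right; right; eexists; split; first reflexivity; split => //; split.
      by exists m; rewrite hm addnS.
    by rewrite (take_nth d0 hty) foldl_rcons hm Hw2.
  + right; left; split => //; exists m.+1.
    rewrite hm; have -> : t = size y by apply/eqP; rewrite eqn_leq ht leqNgt hty.
    rewrite mulSn; lia.
Qed.

Lemma trans_cf i : btrans pinit pstep pfin (rr i) (lab i) (rr i.+1).
Proof.
rewrite /rr /lab /=; move: (inv_cf i); case: (cf i) => [[k t] s].
case=> [[q [-> [hk ->]]] | [[-> [m hm]] | [p [-> [ht [[m hm] ->]]]]]] /=.
- case: ifP => hku /=; first by [].
  apply/existsP; exists c0; rewrite eqxx andbT.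
  have -> : k = size u by apply/eqP; rewrite eqn_leq hk leqNgt hku.
  by rewrite take_size Hu.
- by [].
- case: ifP => hty /=; first by [].
  have -> : t = size y by apply/eqP; rewrite eqn_leq ht leqNgt hty.
  by rewrite take_size Hy !eqxx.
Qed.

Definition mu (x : cfg) : nat :=
  let: (k, t, s) := x in
  match s with
  | inl _ => size u - k + size y + 2
  | inr (existT _ (Some _)) => size y - t + 1
  | inr (existT _ None) => 0
  end.

Lemma mu_step i : 0 < mu (cf i) -> mu (cf i.+1) = (mu (cf i)).-1.
Proof.
rewrite /=; move: (inv_cf i); case: (cf i) => [[k t] s].
case=> [[q [-> [hk ->]]] | [[-> [m hm]] | [p [-> [ht [[m hm] ->]]]]]] /=.
- by case: ifP => hku /= _; lia.
- by [].
- by case: ifP => hty /= _; lia.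
Qed.

Lemma reach0 d : forall i, mu (cf i) = d -> exists i', i <= i' /\ mu (cf i') = 0.
Proof.
elim: d => [|d IH] i hi; first by exists i.
have h := @mu_step i; rewrite hi in h; have {}h := h isT.
have [i' [h1 h2]] := IH i.+1 h.
by exists i'; split => //; apply: ltnW.
Qed.

Lemma mu0 i : mu (cf i) = 0 -> (cf i).2 = inr (Tagged (fun c => option (P c)) (None : option (P c0))).
Proof.
move: (inv_cf i); case: (cf i) => [[k t] s].
case=> [[q [-> [hk ->]]] | [[-> [m hm]] | [p [-> [ht [[m hm] ->]]]]]] //=; lia.
Qed.

Lemma build_acc : eba_accepts (build pinit pstep pfin) w.
Proof.
have reachf : forall i, exists i', i <= i' /\ mu (cf i') = 0.
  by move=> i; apply: (reach0 (erefl _)).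
apply: (@acc_of_run S (build pinit pstep pfin) w rr lab); split.
- by [].
- exact: trans_cf.
- move=> i x; rewrite kk_cf /lab; case: (cf i) => [[k t] s].
  case: s => [q|[c' [p|]]] /=; try case: ifP => //= _; by move=> h; inversion h.
- apply: kk_unb => i; have [i' [h1 h2]] := reachf i.
  exists i'.+1; split; first exact: leqW.
  rewrite /lab /=; move: (mu0 h2); case: (cf i') => [[k t] s] /= ->.
  by rewrite /= Hy0.
- move=> i; have [i' [h1 h2]] := reachf i; exists i'; split => //.
  by rewrite /rr (mu0 h2) inE.
Qed.
End Construct.

Definition seg (S : Type) (w : nat -> S) a b := [seq w j | j <- iota a (b - a)].

Lemma seg0 (S : Type) (w : nat -> S) a : seg w a a = [::].
Proof. by rewrite /seg subnn. Qed.

Lemma seg_cat (S : Type) (w : nat -> S) a b c : a <= b -> b <= c -> seg w a b ++ seg w b c = seg w a c.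
Proof.
move=> hab hbc; rewrite /seg -map_cat.
have -> : c - a = (b - a) + (c - b) by lia.
by rewrite iotaD subnKC.
Qed.

Lemma seg_rcons (S : Type) (w : nat -> S) a b : a <= b -> seg w a b.+1 = rcons (seg w a b) (w b).
Proof.
move=> hab; rewrite -cats1 -(seg_cat w hab (leqnSn b)); congr (_ ++ _).
by rewrite /seg subSnn.
Qed.

Lemma Mrun_cat (S : finType) (F : fdfa S) x y :
  Mrun F (x ++ y) = foldl (fun q a => ld q a) (Mrun F x) y.
Proof. by rewrite /Mrun foldl_cat. Qed.

Arguments kk : simpl never.
Section Extract.
Variable S : finType.
Variable F : fdfa S.
Variable P : comp F -> finType.
Variable pinit : forall c, P c.
Variable pstep : forall c, P c -> S -> P c.
Variable pfin : forall c, P c.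
Variable G : comp F -> seq S -> Prop.
Hypothesis HG : forall c y, foldl (@pstep c) (pinit c) y = pfin c -> G c y.
Hypothesis HGcat : forall c y1 y2, G c y1 -> G c y2 -> G c (y1 ++ y2).
Hypothesis HGM : forall c y, G c y -> foldl (fun q a => ld q a) (ctag c) y = ctag c.

Variable w : nat -> S.
Variable r : nat -> bstate (F:=F) P.
Variable l : nat -> option S.
Hypothesis Hok : @run_ok S (build pinit pstep pfin) w r l.

Notation fS c := (@inr (lq F) {c0 : comp F & option (P c0)} (Tagged (fun c => option (P c)) (None : option (P c)))).
Notation sS c p := (@inr (lq F) {c0 : comp F & option (P c0)} (Tagged (fun c => option (P c)) (Some p : option (P c)))).

Lemma fs_neq c c' (p : P c') : fS c <> sS c' p.
Proof. by move/(f_equal (fun s => s \in bacc P)); rewrite !inE. Qed.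

Lemma fs_tag c c' : fS c = fS c' -> c = c'.
Proof. by move/(f_equal (fun s : bstate P => if s is inr x then tag x else c)). Qed.

Definition Inv0 i :=
  (exists q, r i = inl q /\ q = Mrun F (seg w 0 (kk l i))) \/
  (exists c, r i = fS c /\ Mrun F (seg w 0 (kk l i)) = ctag c) \/
  (exists c N' (p : P c), r i = sS c p /\ N' <= kk l i /\ Mrun F (seg w 0 N') = ctag c /\
      p = foldl (@pstep c) (pinit c) (seg w N' (kk l i))).

Lemma inv0 i : Inv0 i.
Proof.
case: Hok => H0 Htr Hcons _ _.
elim: i => [|i IH].
  by left; exists (l0 F); rewrite H0.
have Ht : btrans pinit pstep pfin (r i) (l i) (r i.+1) := Htr i.
have Hk : kk l i.+1 = kk l i + (l i != None) by [].
case: IH => [[q [Eq Hq]] | [[c [Eq HM]] | [c [N' [p [Eq [hN [HM Hp]]]]]]]];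
  try subst q; rewrite Eq in Ht; case El : (l i) Ht Hk => [a|] /= Ht Hk.
- left; exists (ld (Mrun F (seg w 0 (kk l i))) a); split; first exact/eqP.
  rewrite Hk addn1 seg_rcons // -cats1 Mrun_cat /= (Hcons _ _ El) //.
- have [c /andP [/eqP hc /eqP hr]] := existsP Ht.
  right; right; exists c, (kk l i), (pinit c); split => //.
  by rewrite Hk addn0 seg0 hc.
- by [].
- right; right; exists c, (kk l i), (pinit c); split; first exact/eqP.
  by rewrite Hk addn0 seg0.
- right; right; exists c, N', (pstep p a); split; first exact/eqP.
  rewrite Hk addn1; split; first exact: leqW.
  by rewrite seg_rcons // foldl_rcons -Hp (Hcons _ _ El).
- move: Ht => /andP [/eqP hp /eqP hr]; right; left; exists c; split => //.
  rewrite Hk addn0 -(seg_cat w (leq0n N') hN) Mrun_cat HM; apply: HGM; apply: HG; by rewrite -Hp.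
Qed.

Section Rel.
Variable c : comp F.
Variable i1 : nat.
Hypothesis Hi1 : r i1 = fS c.
Let N1 := kk l i1.

Definition Inv1 i :=
  (r i = fS c /\ (kk l i = N1 \/ G c (seg w N1 (kk l i)))) \/
  (exists N' (p : P c), r i = sS c p /\ N1 <= N' <= kk l i /\ (N' = N1 \/ G c (seg w N1 N')) /\
      p = foldl (@pstep c) (pinit c) (seg w N' (kk l i))).

Lemma inv1 d : Inv1 (i1 + d).
Proof.
case: Hok => H0 Htr Hcons _ _.
elim: d => [|d IH]; first by rewrite /Inv1 addn0; left; split => //; left.
rewrite addnS; set i := i1 + d in IH *.
have hi : N1 <= kk l i by apply: kk_mono; apply: leq_addr.
have Ht : btrans pinit pstep pfin (r i) (l i) (r i.+1) := Htr i.
have Hk : kk l i.+1 = kk l i + (l i != None) by [].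
case: IH => [[Eq HD] | [N' [p [Eq [hN [HD Hp]]]]]];
  rewrite Eq in Ht; case El : (l i) Ht Hk => [a|] /= Ht Hk; rewrite /Inv1.
- by [].
- right; exists (kk l i), (pinit c); split; first exact/eqP.
  rewrite Hk addn0; split; first by rewrite hi leqnn.
  split; last by rewrite seg0.
  by case: HD => [->|]; [left|right].
- right; exists N', (pstep p a); split; first exact/eqP.
  rewrite Hk addn1; split; first by case/andP: hN => -> /leqW ->.
  split => //; rewrite seg_rcons ?foldl_rcons -?Hp ?(Hcons _ _ El) //; by case/andP: hN.
- move: Ht => /andP [/eqP hp /eqP hr]; left; split => //.
  rewrite Hk addn0; right.
  have hG : G c (seg w N' (kk l i)) by apply: HG; rewrite -Hp hp.
  case: HD => [e|hG1]; first by rewrite -e.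
  case/andP: hN => h1 h2; rewrite -(seg_cat w h1 h2); exact: HGcat.
Qed.
End Rel.

Lemma extract_run : exists c (V : nat -> Prop),
  (forall N, V N -> Mrun F (seg w 0 N) = ctag c) /\
  (forall B, exists N, B <= N /\ V N) /\
  (forall N N', V N -> V N' -> N < N' -> G c (seg w N N')).
Proof.
have [H0 Htr Hcons Hunb Hacc] := Hok.
have [i1 [_ Hi1]] := Hacc 0.
case Eri1 : (r i1) Hi1 => [q|[c [p|]]]; rewrite inE //= => _.
have Ei1 : r i1 = fS c by [].
exists c, (fun N => exists i, r i = fS c /\ kk l i = N); split; last split.
- move=> N [i [Ei <-]].
  case: (inv0 i) => [[q [Eq _]] | [[c' [Eq HM]] | [c' [N' [p [Eq _]]]]]].
  + by rewrite Ei in Eq.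
  + by rewrite Ei in Eq; rewrite (fs_tag Eq).
  + by rewrite Ei in Eq; case: (fs_neq Eq).
- move=> B; have [i0 Hi0] := Hunb B.
  have [i' [hi' Hacc']] := Hacc (i1 + i0).
  have := inv1 Ei1 (i' - i1); rewrite subnKC; last by apply: leq_trans hi'; apply: leq_addr.
  case=> [[Eq _] | [N' [p [Eq _]]]]; last by rewrite Eq inE in Hacc'.
  exists (kk l i'); split; last by exists i'.
  by apply: leq_trans Hi0 (kk_mono _ _); apply: leq_trans hi'; apply: leq_addl.
- move=> N N' [ia [Ea <-]] [ib [Eb <-]] hlt.
  have hab : ia <= ib.
    rewrite leqNgt; apply/negP => h; have := kk_mono l (ltnW h); by rewrite leqNgt hlt.
  have := inv1 Ea (ib - ia); rewrite subnKC //.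
  case=> [[_ [e|hG]] | [N'' [p [Eq _]]]] //.
  + by move: hlt; rewrite e ltnn.
  + by rewrite Eb in Eq; case: (fs_neq Eq).
Qed.
End Extract.

Lemma extract (S : finType) (F : fdfa S) (P : comp F -> finType) (pinit : forall c, P c)
  (pstep : forall c, P c -> S -> P c) (pfin : forall c, P c) (G : comp F -> seq S -> Prop) w :
  (forall c y, foldl (@pstep c) (pinit c) y = pfin c -> G c y) ->
  (forall c y1 y2, G c y1 -> G c y2 -> G c (y1 ++ y2)) ->
  (forall c y, G c y -> foldl (fun q a => ld q a) (ctag c) y = ctag c) ->
  eba_accepts (build pinit pstep pfin) w ->
  exists c (V : nat -> Prop),
  (forall N, V N -> Mrun F (seg w 0 N) = ctag c) /\
  (forall B, exists N, B <= N /\ V N) /\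
  (forall N N', V N -> V N' -> N < N' -> G c (seg w N N')).
Proof.
move=> HG HGcat HGM /run_of_acc [r [l Hok]].
exact: (extract_run HG HGcat HGM Hok).
Qed.

Lemma sumn_map_le (T : Type) (f : T -> nat) b s : (forall x, f x <= b) -> sumn (map f s) <= size s * b.
Proof. move=> H; elim: s => //= x s IH; rewrite mulSn; exact: leq_add. Qed.

Lemma comp_card (S : finType) (F : fdfa S) : #|comp F| <= nM F * kmax F.
Proof.
apply: (@leq_trans #|{: {u : lq F & pq u}}|); first by apply: (@leq_card (comp F) _ (fun c : comp F => val c)); apply: val_inj.
rewrite card_tagged /nM cardE; apply: sumn_map_le => q.
exact: (leq_bigmax (F := fun q => #|pq q|) q).
Qed.

Lemma nk_pos (S : finType) (F : fdfa S) : 0 < nM F /\ 0 < kmax F.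
Proof.
split; first by apply/card_gt0P; exists (l0 F).
apply: (@leq_trans #|pq (l0 F)|); first by apply/card_gt0P; exists (ps (l0 F)).
exact: (leq_bigmax (F := fun q => #|pq q|) (l0 F)).
Qed.

Lemma arith3 n k : 0 < n -> 0 < k -> n + n * k * (n * k * k).+1 <= 3 * n ^ 2 * k ^ 3.
Proof.
move=> hn hk.
have e1 : n ^ 2 * k ^ 3 = (n * k) * (n * k * k) by rewrite !expnS expn0; nia.
have h0 : 1 <= n * k by rewrite muln_gt0 hn hk.
have h1 : n * k <= (n * k) * (n * k * k) by apply: leq_pmulr; rewrite !muln_gt0 hn hk.
have h2 : n <= n * k by apply: leq_pmulr.
rewrite -[3 * n ^ 2 * _]mulnA e1 mulnS; lia.
Qed.

Lemma arith2 n k : 0 < n -> 0 < k -> n + n * k * (n * k).+1 <= 3 * n ^ 2 * k ^ 2.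
Proof.
move=> hn hk.
have e1 : n ^ 2 * k ^ 2 = (n * k) * (n * k) by rewrite !expnS expn0; nia.
have h1 : n * k <= (n * k) * (n * k) by apply: leq_pmulr; rewrite !muln_gt0 hn hk.
have h2 : n <= n * k by apply: leq_pmulr.
rewrite -[3 * n ^ 2 * _]mulnA e1 mulnS; lia.
Qed.

Lemma sizes : exists c : nat, forall (S : finType) (F : fdfa S),
      #|est (underB F)| <= c * (nM F) ^ 2 * (kmax F) ^ 3 /\
      #|est (overB F)| <= c * (nM F) ^ 2 * (kmax F) ^ 2.
Proof.
exists 3 => S F.
have [hn hk] := nk_pos F.
have hc := comp_card F.
have hq : forall q : lq F, #|pq q| <= kmax F.
  by move=> q; exact: (leq_bigmax (F := fun q => #|pq q|) q).
set n := nM F in hn hc *; set k := kmax F in hk hc hq *.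
split; rewrite /= card_sum card_tagged.
- apply: (@leq_trans (n + (n * k) * (n * k * k).+1)).
    apply: leq_add; first by [].
    apply: (@leq_trans (size (enum (comp F)) * (n * k * k).+1)).
      apply: sumn_map_le => c; rewrite card_option !card_prod ltnS.
      by apply: leq_mul; [apply: leq_mul|] => //.
    by apply: leq_mul => //; rewrite -cardE.
  exact: arith3.
- apply: (@leq_trans (n + (n * k) * (n * k).+1)).
    apply: leq_add; first by [].
    apply: (@leq_trans (size (enum (comp F)) * (n * k).+1)).
      apply: sumn_map_le => c; rewrite card_option !card_prod ltnS.
      by apply: leq_mul.
    by apply: leq_mul => //; rewrite -cardE.
  exact: arith2.
Qed.

Lemma foldl_ustep (S : finType) (F : fdfa S) (c : comp F) (x : uP c) y :
  foldl (@ustep S F c) x y =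
  (foldl (fun q a => ld q a) x.1.1 y, foldl (fun p a => pd p a) x.1.2 y, foldl (fun p a => pd p a) x.2 y).
Proof. by elim: y x => [|a y IH] [[m p1] p2] //=; rewrite IH. Qed.

Lemma foldl_ostep (S : finType) (F : fdfa S) (c : comp F) (x : oP c) y :
  foldl (@ostep S F c) x y =
  (foldl (fun q a => ld q a) x.1 y, foldl (fun p a => pd p a) x.2 y).
Proof. by elim: y x => [|a y IH] [m p1] //=; rewrite IH. Qed.

Definition Gu (S : finType) (F : fdfa S) (c : comp F) (y : seq S) : Prop :=
  [/\ foldl (fun q a => ld q a) (ctag c) y = ctag c,
      foldl (fun p a => pd p a) (ps (ctag c)) y = cv c &
      foldl (fun p a => pd p a) (cv c) y = cv c].

Lemma in_le_max (s : seq nat) x : x \in s -> x <= foldr maxn 0 s.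
Proof.
elim: s => //= a s IH; rewrite inE => /orP [/eqP ->|/IH h]; first exact: leq_maxl.
exact: leq_trans h (leq_maxr _ _).
Qed.

Lemma pigeon (V : nat -> Prop) T m : 0 < m -> (forall B, exists N, B <= N /\ V N) ->
  exists N N', [/\ V N, V N', T <= N, N < N' & N %% m = N' %% m].
Proof.
move=> hm Hunb.
have Hl : forall K, exists s : seq nat, [/\ size s = K, uniq s & forall x, x \in s -> V x /\ T <= x].
  elim=> [|K [s [hs hu hV]]]; first by exists [::].
  have [N [hN VN]] := Hunb (T + (foldr maxn 0 s).+1).
  exists (N :: s); split => /=; first by rewrite hs.
  - rewrite hu andbT; apply/negP => /in_le_max h; lia.
  - move=> x; rewrite inE => /orP [/eqP ->|/hV //]; split => //; lia.
have [s [hs hu hV]] := Hl m.+1.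
have nu : ~~ uniq [seq x %% m | x <- s].
  apply/negP => hu'.
  have hsub : {subset [seq x %% m | x <- s] <= iota 0 m}.
    by move=> x /mapP [y _ ->]; rewrite mem_iota /= ltn_mod hm.
  by have := uniq_leq_size hu' hsub; rewrite size_map size_iota hs ltnn.
have [i [j [hij hj Heq]]] := uniqPn 0 nu.
rewrite size_map in hj.
have hi : i < size s by apply: ltn_trans hij hj.
rewrite !(nth_map 0) // in Heq.
have hne : nth 0 s i != nth 0 s j by rewrite nth_uniq // neq_ltn hij.
have [Vi Ti] := hV _ (mem_nth 0 hi).
have [Vj Tj] := hV _ (mem_nth 0 hj).
case: (ltngtP (nth 0 s i) (nth 0 s j)) => h.
- by exists (nth 0 s i), (nth 0 s j).
- by exists (nth 0 s j), (nth 0 s i).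
- by rewrite h eqxx in hne.
Qed.

Lemma lasso_period (S : finType) (u0 : seq S) a0 v0 x k :
  size u0 <= x -> size (a0 :: v0) %| k -> lasso u0 a0 v0 (x + k) = lasso u0 a0 v0 x.
Proof.
move=> hx /dvdnP [e ->]; rewrite /lasso ltnNge (leq_trans hx (leq_addr _ _)) /= ltnNge hx /=.
by rewrite -addnBAC // addnC modnMDl.
Qed.

Lemma part2a (S : finType) (F : fdfa S) (w : nat -> S) :
  UP (eba_accepts (underB F)) w -> UP_fdfa F w.
Proof.
case=> Hacc [u0 [a0 [v0 Hw]]].
have [c [V [HVM [Hunb Hpair]]]] :=
  @extract S F (@uP S F) (@uinit S F) (@ustep S F) (@ufin S F) (@Gu S F) w
  ltac:(by move=> c y; rewrite foldl_ustep /= => -[h1 h2 h3]; split)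
  ltac:(by move=> c y1 y2 [h1 h2 h3] [h4 h5 h6]; split; rewrite foldl_cat ?h1 ?h2 ?h3 ?h4 ?h5 ?h6)
  ltac:(by move=> c y [])
  Hacc.
have [N [N' [VN VN' hT hlt hmod]]] := pigeon (size u0) (ltn0Sn (size v0)) Hunb.
have [G1 G2 G3] := Hpair _ _ VN VN' hlt.
have hdvd : size (a0 :: v0) %| N' - N.
  by rewrite -eqn_mod_dvd ?(ltnW hlt) // hmod.
have hsz : size (seg w N N') = N' - N by rewrite /seg size_map size_iota.
case Ey : (seg w N N') hsz G1 G2 G3 => [|a v] hsz G1 G2 G3; first by move: hsz => /= /eqP; rewrite eq_sym subn_eq0 leqNgt hlt.
exists (seg w 0 N), a, v; split.
- rewrite /fdfa_acc Mrun_cat (HVM _ VN) G1 eqxx /=.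
  by rewrite /Arun G2; exact: (valP c).
- move=> i; rewrite /lasso /seg size_map size_iota subn0.
  case: ifP => hi; first by rewrite (nth_map 0) ?size_iota // nth_iota.
  rewrite -Ey /seg size_map size_iota.
  have hd : 0 < N' - N by lia.
  rewrite (nth_map 0) ?size_iota ?ltn_mod // nth_iota ?ltn_mod //.
  have hiN : N <= i by rewrite leqNgt hi.
  rewrite -{1}(subnKC hiN) {1}(divn_eq (i - N) (N' - N)) !Hw.
  rewrite [_ %/ _ * _ + _]addnC addnA lasso_period //; first by apply: leq_trans hT (leq_addr _ _).
  exact: dvdn_mull.
Qed.

Lemma part2b (S : finType) (F : fdfa S) (w : nat -> S) :
  UP_fdfa F w -> UP (eba_accepts (overB F)) w.
Proof.
case=> u [a [v [Hacc Hw]]]; split; last by exists u, a, v.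
move: Hacc; rewrite /fdfa_acc => /andP [/eqP HM Hz].
pose c : comp F := exist _ (existT _ (Mrun F u) (Arun (Mrun F u) (a :: v))) Hz.
apply: (@build_acc S F (@oP S F) (@oinit S F) (@ostep S F) (@ofin S F) c u (a :: v) a w).
- by [].
- have e : foldl (fun q b => ld q b) (Mrun F u) (a :: v) = Mrun F u by rewrite -Mrun_cat HM.
  by rewrite foldl_ostep [X in (X, _)]e.
- by [].
- by move=> k hk; rewrite Hw /lasso hk.
- move=> m t ht; rewrite Hw /lasso -addnA ltnNge leq_addr /= addKn.
  by rewrite modnMDl modn_small.
Qed.

Lemma idem (T : finType) (g : T -> T) (s : T) : exists k, 0 < k /\ iter (k + k) g s = iter k g s.
Proof.
pose f := fun i : 'I_#|T|.+1 => iter i g s.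
have : ~~ injectiveb f.
  apply/negP => /injectiveP hinj; have := leq_card _ hinj.
  by rewrite card_ord ltnn.
move=> /injectivePn [x [y hxy hf]].
have key : forall i j, i < j -> iter i g s = iter j g s -> exists k, 0 < k /\ iter (k + k) g s = iter k g s.
  move=> i j hij he.
  have step : forall n, i <= n -> iter (n + (j - i)) g s = iter n g s.
    move=> n hn; have -> : n + (j - i) = (n - i) + j by lia.
    by rewrite iterD -he -iterD subnK.
  have stept : forall t n, i <= n -> iter (n + t * (j - i)) g s = iter n g s.
    elim=> [|t IH] n hn; first by rewrite mul0n addn0.
    rewrite mulSn addnA IH; [exact: step | exact: leq_trans hn (leq_addr _ _)].
  exists (j * (j - i)); split; first by rewrite muln_gt0 subn_gt0 hij andbT; exact: leq_ltn_trans (leq0n i) hij.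
  apply: stept; apply: leq_trans (ltnW hij) _; apply: leq_pmulr; by rewrite subn_gt0.
case: (ltngtP x y) => h.
- exact: (key _ _ h hf).
- exact: (key _ _ h (esym hf)).
- by move: hxy; rewrite (val_inj h) eqxx.
Qed.

Definition rep (S : Type) k (p : seq S) := flatten (nseq k p).

Lemma size_rep (S : Type) k (p : seq S) : size (rep k p) = k * size p.
Proof. by elim: k => //= k IH; rewrite size_cat IH mulSn. Qed.

Lemma nth_rep (S : Type) (d : S) k (p : seq S) j : j < k * size p -> nth d (rep k p) j = nth d p (j %% size p).
Proof.
elim: k j => [|k IH] j; first by rewrite mul0n.
rewrite /rep /= nth_cat -/(rep k p) mulSn => hj.
case: ifP => h; first by rewrite modn_small.
have hj' : size p <= j by rewrite leqNgt h.
rewrite IH; last lia.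
by rewrite -{2}(subnKC hj') modnDl.
Qed.

Lemma foldl_rep (T S : Type) (f : T -> S -> T) k p x :
  foldl f x (rep k p) = iter k (fun z => foldl f z p) x.
Proof.
elim: k x => //= k IH x; rewrite foldl_cat -/(rep k p) IH.
by rewrite -iterSr.
Qed.

Lemma part3 (S : finType) (L : (nat -> S) -> Prop) (K : fkind) (F : fdfa S) (w : nat -> S) :
  is_canonical_fdfa L K F -> UP_fdfa F w -> UP (eba_accepts (underB F)) w.
Proof.
move=> [HMs [_ HA]] [u [a [v [Hacc Hw]]]]; split; last by exists u, a, v.
move: Hacc; rewrite /fdfa_acc => /andP [/eqP HM Hz].
set q := Mrun F u in HM Hz *.
set p := a :: v.
have e0 : foldl (fun x b => ld x b) q p = q by rewrite /q /p -Mrun_cat HM.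
pose g := fun z : pq q => foldl (fun x b => pd x b) z p.
have [k [hk hid]] := idem g (ps q).
have Hyq : foldl (fun x b => ld x b) q (rep k p) = q.
  rewrite foldl_rep; elim: k {hk hid} => [|k IH] //.
  by rewrite iterS IH e0.
have hy0 : 0 < size (rep k p) by rewrite size_rep muln_gt0 hk.
have Hlas : forall i, size u <= i -> lasso u a v i = nth a (rep k p) ((i - size u) %% size (rep k p)).
  move=> i hi; rewrite /lasso ltnNge hi /= nth_rep; last by rewrite -size_rep ltn_mod.
  by rewrite size_rep modn_dvdm // dvdn_mull.
have [a' [v' Ey]] : exists a' v', rep k p = a' :: v'.
  by move: hy0; case: (rep k p) => // a' v' _; exists a', v'.
rewrite Ey in Hyq Hlas.
have Hyp : forall i, lasso u a v i = lasso u a' v' i.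
  move=> i; case: (ltnP i (size u)) => hi.
    by rewrite /lasso hi; apply: set_nth_default.
  by rewrite Hlas // /lasso ltnNge hi /=; apply: set_nth_default; rewrite ltn_mod.
have [_ [_ Hchar]] := HA u.
have Hz' : Arun q (a' :: v') \in pF q.
  apply/Hchar; have := (Hchar p).1 Hz.
  have Hsim : simL L (u ++ a' :: v') u by apply/HMs; rewrite Mrun_cat Hyq.
  have Hup : upin L u p -> upin L u (a' :: v').
    by rewrite /upin; have -> : lasso u a' v' = lasso u a v by apply: functional_extensionality => i; rewrite Hyp.
  by case: K {HA Hchar} => /=; [exact: Hup | move=> [_ /Hup] | move=> [_ /Hup]].
pose c : comp F := exist _ (existT _ q (Arun q (a' :: v'))) Hz'.
have HwS : forall i, w i = lasso u a' v' i by move=> i; rewrite Hw Hyp.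
apply: (@build_acc S F (@uP S F) (@uinit S F) (@ustep S F) (@ufin S F) c u (a' :: v') a' w).
- by [].
- rewrite foldl_ustep [X in (X, _, _)]Hyq.
  have e2 : foldl (fun x b => pd x b) (Arun q (a' :: v')) (a' :: v') = Arun q (a' :: v').
    by rewrite /Arun -Ey !foldl_rep -iterD -/g hid.
  by rewrite [X in (_, _, X)]e2.
- by [].
- by move=> k0 hk0; rewrite HwS /lasso hk0.
- move=> m t ht; rewrite HwS /lasso -addnA ltnNge leq_addr /= addKn.
  by rewrite modnMDl modn_small.
Qed.

Theorem lemma3 :
  (exists c : nat, forall (S : finType) (F : fdfa S),
      #|est (underB F)| <= c * (nM F) ^ 2 * (kmax F) ^ 3 /\
      #|est (overB F)| <= c * (nM F) ^ 2 * (kmax F) ^ 2) /\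
  (forall (S : finType) (F : fdfa S) (w : nat -> S),
      (UP (eba_accepts (underB F)) w -> UP_fdfa F w) /\
      (UP_fdfa F w -> UP (eba_accepts (overB F)) w)) /\
  (forall (S : finType) (L : (nat -> S) -> Prop) (K : fkind) (F : fdfa S),
      omega_regular L -> is_canonical_fdfa L K F ->
      forall w, UP (eba_accepts (underB F)) w <-> UP_fdfa F w).
Proof.
split; first exact: sizes.
split.
- move=> S F w; split; [exact: part2a | exact: part2b].
- move=> S L K F _ Hcan w; split; [exact: part2a | exact: part3 Hcan].
Qed.
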